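(* Let $G$ be a cactus graph with $n>2$ vertices and $b$ bridges, and let $d=\deg(G)$ be its degree sequence. Then $b\ge \beta$, where $\beta=\max\{\mu_1,\tfrac12(\mu_1+\mu_{odd})\}$.
   Context: A cactus graph is a connected simple graph in which every edge belongs to at most one cycle. A bridge is an edge whose removal disconnects the graph. For a degree sequence $d$, $\mu_1$ denotes the number of entries equal to $1$, and $\mu_{odd}$ denotes the number of entries that are odd integers greater than $1$. *)

(* Defs.v *)
From mathcomp Require Import all_boot all_order all_algebra.
Set Implicit Arguments. Unset Strict Implicit. Unset Printing Implicit Defensive.

Section Graphs.
Variable T : finType.

Definition simple_graph (e : rel T) : Prop := symmetric e /\ irreflexive e.

Definition connected_graph (e : rel T) : bool :=
  [forall x, forall y, connect e x y].

Definition edges (e : rel T) : {set {set T}} :=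
  [set E : {set T} | [exists x, exists y, e x y && (E == [set x; y])]].

Definition is_cycle_seq (e : rel T) (s : seq T) : bool :=
  [&& uniq s, 3 <= size s & cycle e s].

Definition cycle_edges (s : seq T) : {set {set T}} :=
  [set [set x; next s x] | x in s].

Definition cactus (e : rel T) : Prop :=
  simple_graph e /\ connected_graph e /\
  forall (E : {set T}) (s1 s2 : seq T),
    is_cycle_seq e s1 -> is_cycle_seq e s2 ->
    E \in cycle_edges s1 -> E \in cycle_edges s2 ->
    cycle_edges s1 = cycle_edges s2.

Definition remove_edge (e : rel T) (E : {set T}) : rel T :=
  fun x y => e x y && ([set x; y] != E).

Definition bridges (e : rel T) : {set {set T}} :=
  [set E in edges e | ~~ connected_graph (remove_edge e E)].

Definition deg (e : rel T) (v : T) : nat := #|[set u | e v u]|.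

Definition mu1 (e : rel T) : nat := #|[set v | deg e v == 1]|.
Definition muodd (e : rel T) : nat :=
  #|[set v | odd (deg e v) && (1 < deg e v)]|.

End Graphs.

(* Main.v *)
Require Import Defs.
From mathcomp Require Import all_boot all_order all_algebra.
From mathcomp Require Import zify.
Import Order.TTheory GRing.Theory Num.Theory.

Section Helpers.
Set Implicit Arguments. Unset Strict Implicit.

Lemma even_pairing (T : finType) (R : T -> T -> Prop) (A : {set T}) :
  (forall x y, R x y -> R y x) ->
  (forall x, x \in A -> exists y, [/\ y \in A, y != x & R x y]) ->
  (forall x y z, x \in A -> y \in A -> z \in A -> R x y -> R x z -> y = z) ->
  ~~ odd #|A|.
Proof.
move=> Rsym.
have [n] := ubnP #|A|; elim: n A => // n IH A ltA ex un.
case: (set_0Vmem A) => [->|[x xA]]; first by rewrite cards0.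
have [y [yA yx Rxy]] := ex x xA.
set A' := A :\ x :\ y.
have cA : #|A| = (#|A'|).+2.
  by rewrite (cardsD1 x A) xA (cardsD1 y (A :\ x)) !inE yx yA.
rewrite cA /= negbK; apply: IH.
- move: ltA; rewrite cA; lia.
- move=> z; rewrite !inE => /and3P [zy zx zA].
  have [w [wA wz Rzw]] := ex z zA.
  exists w; split => //; rewrite !inE wA andbT; apply/andP; split.
  + apply/eqP => wy; subst w.
    have := un y z x yA zA xA (Rsym _ _ Rzw) (Rsym _ _ Rxy).
    by move=> zx'; rewrite zx' eqxx in zx.
  + apply/eqP => wx; subst w.
    have := un x y z xA yA zA Rxy (Rsym _ _ Rzw).
    by move=> yz; rewrite yz eqxx in zy.
- move=> a b c; rewrite !inE => /and3P [_ _ aA] /and3P [_ _ bA] /and3P [_ _ cA'].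
  exact: un.
Qed.

Lemma cyc_edge_inv (T : finType) (s : seq T) v a :
  uniq s -> v != a -> [set v; a] \in cycle_edges s ->
  v \in s /\ (a = next s v \/ a = prev s v).
Proof.
move=> us va /imsetP [x xs E].
have vE : v \in [set x; next s x] by rewrite -E !inE eqxx.
have aE : a \in [set x; next s x] by rewrite -E !inE eqxx orbT.
move: vE aE; rewrite !inE => /orP [/eqP vx | /eqP vn] /orP [/eqP ax | /eqP an].
- by rewrite vx ax eqxx in va.
- by split; [rewrite vx | left; rewrite an vx].
- split; first by rewrite vn mem_next.
  by right; rewrite vn prev_next // ax.
- by rewrite vn an eqxx in va.
Qed.

Lemma next_neq_prev (T : finType) (s : seq T) v :
  uniq s -> 2 < size s -> v \in s -> next s v != prev s v.
Proof.
move=> us ss vs; case: (rot_to vs) => i s' Ers.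
have us' : uniq (v :: s') by rewrite -Ers rot_uniq.
have ss' : 2 < size (v :: s') by rewrite -Ers size_rot.
rewrite -(next_rot i us) -(prev_rot i us) Ers.
apply/eqP => E.
have := next_prev us' v.
rewrite -E.
move: us' ss'; case: s' {Ers E} => [|a [|b r]] //= /andP [].
rewrite !inE negb_or => /andP [va vbr] /andP [abr _] _.
rewrite !eqxx; rewrite eq_sym in va; rewrite (negbTE va) => bv.
by move: vbr; rewrite bv eqxx.
Qed.

Lemma nonbridge_cycle (T : finType) (e : rel T) v u :
  simple_graph e -> e v u -> [set v; u] \notin bridges e ->
  exists s, [/\ is_cycle_seq e s, v \in s & next s v = u].
Proof.
move=> [esym eirr] evu nb.
have Ed : [set v; u] \in edges e.
  by rewrite inE; apply/existsP; exists v; apply/existsP; exists u; rewrite evu eqxx.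
have : connected_graph (remove_edge e [set v; u]).
  by move: nb; rewrite inE Ed /= negbK.
move/forallP/(_ u)/forallP/(_ v)/connectP => [p pp].
case: (shortenP pp) => p' pp' up' _ vl {pp}.
have uv : u != v by apply/eqP => uv; rewrite uv eirr in evu.
have sub : subrel (remove_edge e [set v; u]) e by move=> x y /andP [].
exists (u :: p').
have pe : path e u p' := sub_path sub pp'.
have vs : v \in u :: p' by rewrite vl mem_last.
have up : uniq (u :: p') := up'.
split => //.
- apply/and3P; split => //.
  + move: pp' vl; case: p' {up' pe vs up} => [|w [|w' r]] //=.
    * by move=> _ vu; rewrite vu eqxx in uv.
    * move=> /andP [/andP [_ ne] _] vw.
      by rewrite vw setUC eqxx in ne.
  + by rewrite /cycle rcons_path pe /= -vl.
- have pu : prev (u :: p') u = v.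
    rewrite prev_nth mem_head /=.
    move: up; rewrite /= => /andP [unp _].
    rewrite (memNindex unp).
    by rewrite -[size p']/((size (u :: p')).-1) nth_last.
  by rewrite -{1}pu (next_prev up).
Qed.

Lemma odd_deg_bridge (T : finType) (e : rel T) v :
  cactus e -> odd (deg e v) -> exists u, e v u /\ [set v; u] \in bridges e.
Proof.
move=> [[esym eirr] [conn cac]] od.
case: (boolP [exists u, e v u && ([set v; u] \in bridges e)]) =>
  [/existsP [u /andP [h1 h2]] | /existsPn nb]; first by exists u.
exfalso; move: od; apply/negP; rewrite /deg.
have vne w : e v w -> v != w by move=> h; apply/eqP => vw; rewrite vw eirr in h.
apply: (@even_pairing T (fun u w => u != w /\ exists s, [/\ is_cycle_seq e s,
          [set v; u] \in cycle_edges s & [set v; w] \in cycle_edges s])).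
- by move=> x y [xy [s [c1 c2 c3]]]; split; [rewrite eq_sym | exists s].
- move=> u; rewrite inE => evu.
  have nbu := nb u; rewrite evu /= in nbu.
  have [s [cs vs nx]] := nonbridge_cycle (conj esym eirr) evu nbu.
  move: (cs) => /and3P [us ss cyc].
  exists (prev s v); split.
  + by rewrite inE esym; apply: prev_cycle.
  + by rewrite -nx eq_sym; apply: next_neq_prev.
  + split; first by rewrite -nx; apply: next_neq_prev.
    exists s; split => //.
    * by rewrite -nx; apply/imsetP; exists v.
    * apply/imsetP; exists (prev s v); first by rewrite mem_prev.
      by rewrite next_prev // setUC.
- move=> x y z; rewrite !inE => evx evy evz [xy [s1 [c1 a1 b1]]] [xz [s2 [c2 a2 b2]]].
  have E := cac _ _ _ c1 c2 a1 a2. rewrite -E in b2.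
  have us1 : uniq s1 by case/and3P: c1.
  have [_ hx] := cyc_edge_inv us1 (vne _ evx) a1.
  have [_ hy] := cyc_edge_inv us1 (vne _ evy) b1.
  have [_ hz] := cyc_edge_inv us1 (vne _ evz) b2.
  move: xy xz; case: hx => ->; case: hy => ->; case: hz => ->; rewrite ?eqxx //.
Qed.

Lemma leaf_nbr (T : finType) (e : rel T) v u :
  deg e v = 1 -> e v u -> forall z, e v z -> z = u.
Proof.
move=> /eqP/cards1P [x Ex] evu z evz.
have : u \in [set x] by rewrite -Ex inE.
have : z \in [set x] by rewrite -Ex inE.
by rewrite !inE => /eqP -> /eqP ->.
Qed.

Lemma leaf_has_nbr (T : finType) (e : rel T) v :
  deg e v = 1 -> e v (odflt v [pick u | e v u]).
Proof.
case: pickP => [u //|H] /= dv.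
have E : [set u | e v u] = set0 by apply/setP => x; rewrite !inE H.
by rewrite /deg E cards0 in dv.
Qed.

Lemma leaf_bridge (T : finType) (e : rel T) v u :
  1 < #|T| -> deg e v = 1 -> e v u -> [set v; u] \in bridges e.
Proof.
move=> T1 dv evu; rewrite inE; apply/andP; split.
  by rewrite inE; apply/existsP; exists v; apply/existsP; exists u; rewrite evu eqxx.
have [w wv] : exists w, w != v.
  case: (pickP (predC1 v)) => [w /= wv | H]; first by exists w.
  have : #|T| <= #|[set v]|.
    apply: subset_leq_card; apply/subsetP => x _.
    by have := H x; rewrite /= inE => /negbFE.
  by rewrite cards1; lia.
apply/negP => /forallP/(_ v)/forallP/(_ w)/connectP [[|z p] /= pz wl].
  by rewrite wl eqxx in wv.
move: pz => /andP [/andP [evz ne] _].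
by rewrite (leaf_nbr dv evu evz) eqxx in ne.
Qed.

Lemma mu1_le (T : finType) (e : rel T) :
  simple_graph e -> connected_graph e -> 2 < #|T| -> mu1 e <= #|bridges e|.
Proof.
move=> [esym eirr] conn T2.
pose f v := [set v; odflt v [pick u | e v u]].
have inj : {in [set v | deg e v == 1] &, injective f}.
  move=> v1 v2; rewrite !inE => /eqP d1 /eqP d2 Ef.
  have e1 := leaf_has_nbr d1; have e2 := leaf_has_nbr d2.
  move: Ef e1 e2; rewrite /f.
  set u1 := odflt v1 _; set u2 := odflt v2 _ => Ef e1 e2.
  apply/eqP; apply/negP => /negP n12.
  have : v1 \in [set v2; u2] by rewrite -Ef !inE eqxx.
  rewrite !inE (negbTE n12) /= => /eqP h1.
  have : v2 \in [set v1; u1] by rewrite Ef !inE eqxx.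
  rewrite !inE eq_sym (negbTE n12) /= => /eqP h2.
  rewrite -h2 in e1; rewrite -h1 in e2.
  have key x y : e x y -> x \in [set v1; v2] -> y \in [set v1; v2].
    move=> exy; rewrite !inE => /orP [/eqP xv | /eqP xv]; subst x.
    - by rewrite (leaf_nbr d1 e1 exy) eqxx orbT.
    - by rewrite (leaf_nbr d2 e2 exy) eqxx.
  have cl : closed e [set v1; v2].
    move=> x y exy; apply/idP/idP; first exact: key.
    by apply: key; rewrite esym.
  have : #|T| <= #|[set v1; v2]|.
    apply: subset_leq_card; apply/subsetP => x _.
    have c : connect e v1 x by move/forallP: conn => /(_ v1)/forallP/(_ x).
    by rewrite -(closed_connect cl c) !inE eqxx.
  rewrite cards2; lia.
rewrite /mu1 -(card_in_imset inj).
apply: subset_leq_card; apply/subsetP => E /imsetP [v]; rewrite inE => /eqP dv ->.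
apply: leaf_bridge => //; first lia.
exact: leaf_has_nbr.
Qed.

Lemma mu_odd_le (T : finType) (e : rel T) :
  cactus e -> 2 < #|T| -> mu1 e + muodd e <= 2 * #|bridges e|.
Proof.
move=> cac T2.
pose I := [set v | [exists u, e v u && ([set v; u] \in bridges e)]].
have hI : #|I| <= 2 * #|bridges e|.
  have sub : I \subset \bigcup_(E in bridges e) E.
    apply/subsetP => v; rewrite inE => /existsP [u /andP [evu bu]].
    by apply/bigcupP; exists [set v; u] => //; rewrite !inE eqxx.
  apply: leq_trans (subset_leq_card sub) _.
  have h : #|\bigcup_(E in bridges e) E| <= \sum_(E in bridges e) #|E|.
    apply: (big_rec2 (fun (A : {set T}) n => #|A| <= n)); first by rewrite cards0.
    move=> E A n _ IH.
    apply: leq_trans (leq_card_setU E A) _.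
    by rewrite leq_add2l.
  apply: leq_trans h _.
  have h2 : \sum_(E in bridges e) #|E| <= \sum_(E in bridges e) 2.
    apply: leq_sum => E; rewrite inE => /andP [] /[swap] _.
    rewrite inE => /existsP [x /existsP [y /andP [_ /eqP ->]]].
    by rewrite cards2 ltnS leq_b1.
  by apply: leq_trans h2 _; rewrite sum_nat_const mulnC.
apply: leq_trans hI.
rewrite /mu1 /muodd -cardsUI.
have -> : [set v | deg e v == 1] :&: [set v | odd (deg e v) && (1 < deg e v)] = set0.
  apply/setP => v; rewrite !inE.
  by case: (deg e v) => [|[|k]].
rewrite cards0 addn0.
apply: subset_leq_card; apply/subsetP => v; rewrite !inE => /orP [/eqP dv | /andP [od _]].
- apply/existsP; exists (odflt v [pick u | e v u]).
  rewrite leaf_has_nbr //=; apply: leaf_bridge => //; first lia.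
  exact: leaf_has_nbr.
- have [u [evu bu]] := odd_deg_bridge cac od.
  by apply/existsP; exists u; rewrite evu bu.
Qed.

End Helpers.

Theorem lemma4p4 (T : finType) (e : rel T) :
  cactus e -> 2 < #|T| ->
  (Num.max ((mu1 e)%:R : rat) (((mu1 e + muodd e)%:R : rat) / 2%:R)
     <= (#|bridges e|)%:R)%R.
Proof.
move=> cac T2.
have h1 : mu1 e <= #|bridges e|.
  by case: cac => [sg [conn _]]; apply: mu1_le.
have h2 := mu_odd_le cac T2.
rewrite ge_max; apply/andP; split; first by rewrite ler_nat.
rewrite ler_pdivrMr ?ltr0n // -natrM ler_nat.
by rewrite mulnC.
Qed.
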